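(* For $r\ge 2$, the friendship graph $F_r=W(3,r)$ admits a weak IASI and its sparing number is $r$.
   Context: The friendship graph $F_r$ is obtained by joining $r$ copies of the cycle $C_3$ at a single common vertex; equivalently it is the windmill graph $W(3,r)$ ($r$ copies of $K_3$ sharing one vertex). Let $\mathbb{N}_0$ be the set of non-negative integers; for $A,B\subseteq\mathbb{N}_0$, $A+B=\{a+b:a\in A,b\in B\}$. An integer additive set-indexer (IASI) of a graph $G$ is an injective map $f:V(G)\to\mathcal{P}(\mathbb{N}_0)$ such that $f^+:E(G)\to\mathcal{P}(\mathbb{N}_0)$, $f^+(uv)=f(u)+f(v)$, is injective. A weak IASI is an IASI with $|f^+(uv)|=\max(|f(u)|,|f(v)|)$ for every edge $uv$. An edge $e$ is mono-indexed if $|f^+(e)|=1$. The sparing number $\varphi(G)$ is the minimum number of mono-indexed edges over all weak IASIs of $G$. *)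

(* Defs.v *)
From mathcomp Require Import all_boot.
From mathcomp Require Import finmap.
Set Implicit Arguments. Unset Strict Implicit. Unset Printing Implicit Defensive.
Local Open Scope fset_scope.

(* Subsets of N0 are represented as finite sets of naturals. *)
Definition sumset (A B : {fset nat}) : {fset nat} :=
  [fset (a + b)%N | a in A, b in B].

(* A finite simple graph: vertex type V (a finType) with adjacency relation
   adj, assumed symmetric and irreflexive where needed. Edges are the
   unordered pairs [set u; v] with adj u v. *)
Definition is_edge (V : finType) (adj : rel V) (E : {set V}) : bool :=
  [exists u, exists v, adj u v && (E == [set u; v])].

Definition iasi (V : finType) (adj : rel V) (f : V -> {fset nat}) : Prop :=
  injective f /\
  (forall u v u' v' : V, adj u v -> adj u' v' ->
     sumset (f u) (f v) = sumset (f u') (f v') -> [set u; v] = [set u'; v']).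

Definition weak_iasi (V : finType) (adj : rel V) (f : V -> {fset nat}) : Prop :=
  iasi adj f /\
  (forall u v : V, adj u v ->
     #|` sumset (f u) (f v)| = maxn #|` f u| #|` f v|).

Definition mono_count (V : finType) (adj : rel V) (f : V -> {fset nat}) : nat :=
  #|[set E : {set V} | is_edge adj E &&
     [exists u, exists v, (E == [set u; v]) && adj u v &&
        (#|` sumset (f u) (f v)| == 1%N)]]|.

Definition is_sparing_number (V : finType) (adj : rel V) (k : nat) : Prop :=
  (exists f, weak_iasi adj f /\ mono_count adj f = k) /\
  (forall f, weak_iasi adj f -> (k <= mono_count adj f)%N).

(* Friendship graph F_r = W(3, r): vertex 0 is the common vertex, and for
   1 <= i <= r the i-th triangle is {0, 2i-1, 2i}. *)
Definition friendship_adj (r : nat) : rel 'I_(r.*2.+1) :=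
  fun u v => (u != v) &&
    [|| nat_of_ord u == 0%N, nat_of_ord v == 0%N
      | (nat_of_ord u).-1./2 == (nat_of_ord v).-1./2].
Arguments friendship_adj : clear implicits.

(* Main.v *)
Require Import Defs.
From mathcomp Require Import all_boot finmap zify.
Set Implicit Arguments. Unset Strict Implicit. Unset Printing Implicit Defensive.
Local Open Scope fset_scope.

Lemma max_in (s : seq nat) : s != [::] -> \max_(i <- s) i \in s.
Proof.
elim: s => [//|x s IH] _; rewrite big_cons inE.
case: s IH => [|y s] IH; first by rewrite big_nil maxn0 eqxx.
have /IH H : y :: s != [::] by [].
move: H; set m := (X in maxn x X) => H.
by rewrite /maxn; case: ifP => _; rewrite ?eqxx ?H ?orbT.
Qed.

Lemma le_max (s : seq nat) x : x \in s -> x <= \max_(i <- s) i.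
Proof. by move=> xs; apply: (@leq_bigmax_seq _ _ xpredT (fun i => i) _ xs). Qed.

Lemma mem_sumset A B x : (x \in sumset A B) <-> exists2 a, a \in A & exists2 b, b \in B & x = (a + b)%N.
Proof. by split; [move/imfset2P | move=> H; apply/imfset2P]. Qed.

Lemma sumsetC A B : sumset A B = sumset B A.
Proof.
apply/fsetP => x; apply/idP/idP => /mem_sumset [a aA [b bB ->]]; apply/mem_sumset;
 exists b => //; exists a => //; exact: addnC.
Qed.

Lemma sumset_big A B : (0 < #|` A|)%N -> (2 <= #|` B|)%N -> (#|` A| < #|` sumset A B|)%N.
Proof.
move=> A0 B2.
have An : (A : seq nat) != [::].
  by apply: contraTneq A0 => ->.
set M := \max_(i <- (A : seq nat)) i.
have Bn : (B : seq nat) != [::].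
  by apply: contraTneq B2 => ->.
set N := \max_(i <- (B : seq nat)) i.
have MA : M \in A := max_in An.
have NB : N \in B := max_in Bn.
have [b' b'B b'N] : exists2 b', b' \in B & (b' < N)%N.
  have [E|[b' Hb]] := fset_0Vmem (B `\ N); last first.
    move: Hb; rewrite !inE => /andP[bN bB]; exists b' => //.
    by rewrite ltn_neqAle bN le_max.
  have : B `<=` [fset N].
    apply/fsubsetP => x xB; rewrite in_fset1; apply/negPn/negP => xN.
    have : x \in B `\ N by rewrite !inE xN xB.
    by rewrite E inE.
  by move/fsubset_leq_card; rewrite cardfs1 => h; move: (leq_trans B2 h).
pose X := [fset (a + b')%N | a in A].
have cX : #|` X| = #|` A|.
  rewrite card_imfset //=; by move=> x y /addIn.
have XS : (M + N)%N |` X `<=` sumset A B.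
  apply/fsubsetP => x /fset1UP [->|/imfsetP [a aA ->]]; apply/mem_sumset.
    by exists M => //; exists N.
  by exists a => //; exists b'.
have nX : (M + N)%N \notin X.
  apply/negP => /imfsetP [a aA /eqP]; apply/negP; rewrite neq_ltn; apply/orP; right.
  have aA' : a \in A := aA.
  by apply: leq_ltn_trans (leq_add (le_max aA') (leqnn b')) _; rewrite ltn_add2l.
move/fsubset_leq_card: XS; rewrite cardfsU1 nX cX //.
Qed.

Lemma sumset0 B : sumset fset0 B = fset0.
Proof. by apply/fsetP => x; rewrite inE; apply/negP => /mem_sumset [a]; rewrite inE. Qed.

Lemma sumset11 m n : sumset [fset m] [fset n] = [fset (m + n)%N].
Proof.
apply/fsetP => x; rewrite in_fset1; apply/idP/eqP.
  by move=> /mem_sumset [a]; rewrite in_fset1 => /eqP -> [b]; rewrite in_fset1 => /eqP ->.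
by move=> ->; apply/mem_sumset; exists m; rewrite ?in_fset1 //; exists n; rewrite ?in_fset1.
Qed.

Lemma sumset01 n : sumset [fset 0%N; 1%N] [fset n] = [fset n; n.+1].
Proof.
apply/fsetP => x; apply/idP/idP.
  move=> /mem_sumset [a ha [b hb ->]]; move: ha hb; rewrite !inE.
  by move=> /orP[]/eqP-> /eqP->; rewrite ?eqxx ?orbT.
rewrite !inE => /orP[]/eqP->; apply/mem_sumset; [exists 0%N | exists 1%N];
  rewrite ?inE ?eqxx ?orbT //; exists n; rewrite ?inE ?eqxx //.
Qed.

Section F.
Variable r : nat.
Notation V := 'I_(r.*2.+1).
Notation adj := (friendship_adj r).

Lemma adjE (u v : V) : adj u v = ((u : nat) != v) &&
   [|| (u : nat) == 0%N, (v : nat) == 0%N | (u : nat).-1./2 == (v : nat).-1./2].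
Proof. by []. Qed.

Lemma adj_sym (u v : V) : adj u v = adj v u.
Proof. rewrite !adjE; lia. Qed.

Definition va (k : 'I_r) : V := inord (k.*2.+1).
Definition vb (k : 'I_r) : V := inord (k.*2.+2).
Definition v0 : V := ord0.

Lemma va_val k : (va k : nat) = k.*2.+1.
Proof. rewrite inordK //; have := ltn_ord k; lia. Qed.
Lemma vb_val k : (vb k : nat) = k.*2.+2.
Proof. rewrite inordK //; have := ltn_ord k; lia. Qed.

Lemma adj0a k : adj v0 (va k). Proof. rewrite adjE va_val /=; lia. Qed.
Lemma adj0b k : adj v0 (vb k). Proof. rewrite adjE vb_val /=; lia. Qed.
Lemma adjab k : adj (va k) (vb k). Proof. rewrite adjE va_val vb_val /=; lia. Qed.

Lemma adj_neq (u v : V) : adj u v -> u != v. Proof. by case/andP. Qed.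

Lemma nonempty f (u v : V) : weak_iasi adj f -> adj u v -> (0 < #|` f u|)%N.
Proof.
case=> [[finj _] wk] h; rewrite lt0n cardfs_eq0; apply/negP => /eqP fu0.
have := wk u v h; rewrite fu0 sumset0 cardfs0 max0n => /esym/cardfs0_eq fv0.
by move/negP: (adj_neq h); apply; apply/eqP/finj; rewrite fu0 fv0.
Qed.

Lemma one_side f (u v : V) : weak_iasi adj f -> adj u v ->
  (#|` f u| <= 1)%N \/ (#|` f v| <= 1)%N.
Proof.
move=> w h.
have hu := nonempty w h; have hv := nonempty w (etrans (adj_sym v u) h).
case: (leqP #|` f u| 1) => hu1; first by left.
case: (leqP #|` f v| 1) => hv1; first by right.
have h1 := sumset_big hu hv1; have h2 := sumset_big hv hu1.
rewrite sumsetC in h2; move: (w.2 u v h) => E; move: h1 h2; rewrite E; lia.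
Qed.

Lemma sum1 f (u v : V) : #|` f u| = 1%N -> #|` f v| = 1%N -> #|` sumset (f u) (f v)| = 1%N.
Proof.
move=> /eqP/cardfs1P [x ->] /eqP/cardfs1P [y ->]; by rewrite sumset11 cardfs1.
Qed.

Definition monoset (f : V -> {fset nat}) := [set E : {set V} | is_edge adj E &&
     [exists u, exists v, (E == [set u; v]) && adj u v &&
        (#|` sumset (f u) (f v)| == 1%N)]].

Lemma mono_mem f (u v : V) : adj u v -> #|` sumset (f u) (f v)| = 1%N ->
  [set u; v] \in monoset f.
Proof.
move=> h E; rewrite inE; apply/andP; split.
  by apply/existsP; exists u; apply/existsP; exists v; rewrite h eqxx.
by apply/existsP; exists u; apply/existsP; exists v; rewrite eqxx h E eqxx.
Qed.

Definition g (f : V -> {fset nat}) (k : 'I_r) : {set V} :=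
  if (#|` f (va k)| == 1%N) && (#|` f (vb k)| == 1%N) then [set va k; vb k]
  else if #|` f (va k)| == 1%N then [set v0; va k] else [set v0; vb k].

Lemma g_in f k : weak_iasi adj f -> g f k \in monoset f.
Proof.
move=> w.
have a0 := adj0a k; have b0 := adj0b k; have ab := adjab k.
have n0 := nonempty w a0; have na := nonempty w ab.
have nb := nonempty w (etrans (adj_sym _ _) ab).
have e1 := one_side w a0; have e2 := one_side w b0; have e3 := one_side w ab.
rewrite /g; case: ifP => [/andP [/eqP h1 /eqP h2]|/negbT h].
  exact: mono_mem ab (sum1 h1 h2).
case: ifP => [/eqP h1|/negbT h1].
  have h0 : #|` f v0| = 1%N by lia.
  exact: mono_mem a0 (sum1 h0 h1).
have h0 : #|` f v0| = 1%N by lia.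
have h2 : #|` f (vb k)| = 1%N by lia.
exact: mono_mem b0 (sum1 h0 h2).
Qed.

Lemma g_sub f k x : x \in g f k -> x = v0 \/ x = va k \/ x = vb k.
Proof. by rewrite /g; case: ifP => _; [|case: ifP => _]; rewrite !inE => /orP[]/eqP; auto. Qed.

Lemma g_wit f k : va k \in g f k \/ vb k \in g f k.
Proof. by rewrite /g; case: ifP => _; [|case: ifP => _]; rewrite !inE eqxx ?orbT; auto. Qed.

Lemma g_inj f : injective (g f).
Proof.
move=> k k' E.
have [x [xg hx]] : exists x, x \in g f k' /\ (x = va k \/ x = vb k).
  by case: (g_wit f k); rewrite E => H; [exists (va k) | exists (vb k)]; auto.
apply: val_inj.
case: (g_sub xg) => [|[]] /(congr1 (@nat_of_ord _));
 case: hx => -> ; rewrite ?va_val ?vb_val /=; lia.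
Qed.

Lemma lower f : weak_iasi adj f -> (r <= mono_count adj f)%N.
Proof.
move=> w.
rewrite -[X in (X <= _)%N](card_ord r) -cardsT -(card_imset _ (@g_inj f)).
apply: subset_leq_card; apply/subsetP => E /imsetP [k _ ->]; exact: g_in.
Qed.


Definition f0 (v : V) : {fset nat} :=
  if (v : nat) == 0%N then [fset 0%N; 1%N] else [fset (v : nat)].

Lemma v0_eq (u : V) : (u : nat) = 0%N -> u = v0.
Proof. by move=> h; apply: val_inj. Qed.

Lemma block (u v : V) : (u : nat) != 0%N -> (v : nat) != 0%N -> (u : nat) != v ->
  (u : nat).-1./2 = (v : nat).-1./2 ->
  exists k : 'I_r, [set u; v] = [set va k; vb k] /\ ((u : nat) + v = k.*2.+1 + k.*2.+2)%N.
Proof.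
move=> hu hv huv hb.
have hk : ((u : nat).-1./2 < r)%N by have := ltn_ord u; lia.
have [k kv] : exists k : 'I_r, (k : nat) = (u : nat).-1./2 by exists (Ordinal hk).
exists k; rewrite -kv in hb *.
have : ((u : nat) == k.*2.+1) && ((v : nat) == k.*2.+2)
    || ((v : nat) == k.*2.+1) && ((u : nat) == k.*2.+2).
  by lia.
case/orP => /andP [/eqP e1 /eqP e2]; (split; last by lia).
  have -> : u = va k by apply: val_inj => /=; rewrite va_val.
  have -> : v = vb k by apply: val_inj => /=; rewrite vb_val.
  by [].
have -> : v = va k by apply: val_inj => /=; rewrite va_val.
have -> : u = vb k by apply: val_inj => /=; rewrite vb_val.
by rewrite setUC.
Qed.

Lemma edge_class (u v : V) : adj u v ->
  (exists w : V, (w : nat) != 0%N /\ [set u; v] = [set v0; w] /\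
      sumset (f0 u) (f0 v) = [fset (w : nat); (w : nat).+1]) \/
  (exists k : 'I_r, [set u; v] = [set va k; vb k] /\
      sumset (f0 u) (f0 v) = [fset (k.*2.+1 + k.*2.+2)%N]).
Proof.
move=> h; have h' := h; rewrite adjE in h'.
case: (eqVneq (u : nat) 0%N) => hu.
  left; exists v; split; first by lia.
  rewrite (v0_eq hu); split => //.
  have hv : (v : nat) != 0%N by move: h'; rewrite hu; lia.
  by rewrite /f0 /v0 /= (negbTE hv) sumset01.
case: (eqVneq (v : nat) 0%N) => hv.
  left; exists u; split => //.
  rewrite (v0_eq hv) setUC; split => //.
  by rewrite /f0 /v0 /= (negbTE hu) sumsetC sumset01.
right.
have huv : (u : nat) != v by lia.
have hb : (u : nat).-1./2 = (v : nat).-1./2 by lia.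
have [k [E S]] := block hu hv huv hb.
exists k; split => //.
by rewrite /f0 (negbTE hu) (negbTE hv) sumset11 S.
Qed.

Lemma fset2_inj a b : [fset a; a.+1] = [fset b; b.+1] -> a = b.
Proof.
move=> E.
have h1 : a \in [fset b; b.+1] by rewrite -E !inE eqxx.
have h2 : b \in [fset a; a.+1] by rewrite E !inE eqxx.
move: h1 h2; rewrite !inE; lia.
Qed.

Lemma card2 a : #|` [fset a; a.+1]| = 2%N.
Proof. by rewrite cardfs2; case: eqP => //; lia. Qed.

Lemma weak_f0 : weak_iasi adj f0.
Proof.
split; first split.
- move=> u v; rewrite /f0; case: eqP => hu; case: eqP => hv.
  + by move=> _; apply: val_inj => /=; rewrite hu hv.
  + by move/(congr1 (fun A => #|` A|)); rewrite cardfs2 cardfs1.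
  + by move/(congr1 (fun A => #|` A|)); rewrite cardfs2 cardfs1.
  + by move/fset1_inj => e; apply: val_inj.
- move=> u v u' v' h h' E.
  case: (edge_class h) => [[w [w0 [Ew Sw]]]|[k [Ek Sk]]];
  case: (edge_class h') => [[w' [w0' [Ew' Sw']]]|[k' [Ek' Sk']]].
  + rewrite Ew Ew'; congr [set _; _]; apply: val_inj; apply: fset2_inj.
    by rewrite -Sw -Sw' E.
  + by move: E; rewrite Sw Sk' => /(congr1 (fun A => #|` A|)); rewrite card2 cardfs1.
  + by move: E; rewrite Sk Sw' => /(congr1 (fun A => #|` A|)); rewrite card2 cardfs1.
  + rewrite Ek Ek'; have : k = k'.
      by apply: val_inj => /=; move: E; rewrite Sk Sk' => /fset1_inj; lia.
    by move=> ->.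
- move=> u v h; have h' := h; rewrite adjE in h'; rewrite /f0.
  case: eqP => hu; case: eqP => hv.
  + by exfalso; move: h'; rewrite hu hv.
  + by rewrite sumset01 card2 cardfs2 cardfs1.
  + by rewrite sumsetC sumset01 card2 cardfs2 cardfs1.
  + by rewrite sumset11 !cardfs1.
Qed.

Lemma upper : (mono_count adj f0 <= r)%N.
Proof.
apply: (@leq_trans #|[set [set va k; vb k] | k : 'I_r]|); last first.
  by rewrite -[X in (_ <= X)%N](card_ord r) leq_imset_card.
apply: subset_leq_card; apply/subsetP => E; rewrite inE => /andP [_ /existsP [u /existsP [v]]].
case/andP => /andP [/eqP -> h] /eqP c.
case: (edge_class h) => [[w [w0 [Ew Sw]]]|[k [Ek Sk]]].
  by move: c; rewrite Sw card2.
by rewrite Ek; apply/imsetP; exists k.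
Qed.

End F.

Theorem corollary2p16 (r : nat) (hr : (2 <= r)%N) :
  (exists f, weak_iasi (friendship_adj r) f) /\
  is_sparing_number (friendship_adj r) r.
Proof.
split; first by exists (@f0 r); exact: weak_f0.
split; last by move=> f; exact: lower.
exists (@f0 r); split; first exact: weak_f0.
by apply/eqP; rewrite eqn_leq upper lower //; exact: weak_f0.
Qed.
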